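(* Let $I,J\in\mathbb{I}_{m,n}$ and suppose $I^{cc}_0\subseteq J_0$. Then $I\le J$.
   Context: For integers $m,n\ge1$, $G_{m,n}$ is the equioriented commutative $m\times n$ grid: the quiver with vertex set $\{(i,j):1\le i\le m,\ 1\le j\le n\}$ and arrows $(i,j)\to(i,j+1)$ and $(i,j)\to(i+1,j)$, bound by all commutativity relations. An interval of $G_{m,n}$ is a nonempty full subquiver $I$ which is connected (as an undirected graph) and convex (whenever $x,y\in I_0$ and there are paths $x\to z$ and $z\to y$ in $G_{m,n}$, then $z\in I_0$); $I_0$ denotes its vertex set. $\mathbb{I}_{m,n}$ is the set of intervals, partially ordered by $I\le J\iff I_0\subseteq J_0$. For $I\in\mathbb{I}_{m,n}$, $I^{ss}_0$ is the set of vertices of $I$ that are sources or sinks of the quiver $I$, and $I^{cc}_0=I_0\cap(\mathrm{pr}_1(I^{ss}_0)\times\mathrm{pr}_2(I^{ss}_0))$, where $\mathrm{pr}_1,\mathrm{pr}_2$ are the projections to the first and second coordinates. *)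

(* Defs.v *)
From mathcomp Require Import all_boot.
Set Implicit Arguments. Unset Strict Implicit. Unset Printing Implicit Defensive.

(* Vertices of the m x n grid G_{m,n}: vertex (i,j) with 1<=i<=m, 1<=j<=n
   is represented 0-indexed by (i-1, j-1) : 'I_m * 'I_n. *)
Definition gvert (m n : nat) := ('I_m * 'I_n)%type.

Definition garrow (m n : nat) (x y : gvert m n) : bool :=
  ((val x.1 == val y.1) && (val y.2 == (val x.2).+1)) ||
  ((val x.2 == val y.2) && (val y.1 == (val x.1).+1)).

Definition gpath (m n : nat) (x y : gvert m n) : bool :=
  connect (@garrow m n) x y.

Definition adjIn (m n : nat) (I : {set gvert m n}) : rel (gvert m n) :=
  fun x y => [&& x \in I, y \in I & garrow x y || garrow y x].

Definition connectedSub (m n : nat) (I : {set gvert m n}) : bool :=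
  [forall x in I, forall y in I, connect (adjIn I) x y].

Definition convexSub (m n : nat) (I : {set gvert m n}) : bool :=
  [forall x in I, forall y in I, forall z,
     (gpath x z && gpath z y) ==> (z \in I)].

Definition is_interval (m n : nat) (I : {set gvert m n}) : bool :=
  [&& I != set0, connectedSub I & convexSub I].

Definition is_source (m n : nat) (I : {set gvert m n}) (x : gvert m n) : bool :=
  (x \in I) && [forall y in I, ~~ garrow y x].
Definition is_sink (m n : nat) (I : {set gvert m n}) (x : gvert m n) : bool :=
  (x \in I) && [forall y in I, ~~ garrow x y].

Definition ssSet (m n : nat) (I : {set gvert m n}) : {set gvert m n} :=
  [set x in I | is_source I x || is_sink I x].

(* I^cc_0 = I_0 ∩ (pr1(I^ss_0) × pr2(I^ss_0)) *)
Definition ccSet (m n : nat) (I : {set gvert m n}) : {set gvert m n} :=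
  [set x in I | [exists a in ssSet I, a.1 == x.1] &&
                [exists b in ssSet I, b.2 == x.2]].

(* Main.v *)
Require Import Defs.
From mathcomp Require Import all_boot.
From mathcomp Require Import zify.

Lemma garrow_sum {m n : nat} (x y : gvert m n) :
  garrow x y -> val y.1 + val y.2 = (val x.1 + val x.2).+1.
Proof.
rewrite /garrow => /orP [/andP [/eqP h1 /eqP h2] | /andP [/eqP h1 /eqP h2]]; lia.
Qed.

Lemma ss_in_cc (m n : nat) (I : {set gvert m n}) x :
  x \in I -> is_source I x || is_sink I x -> x \in ccSet I.
Proof.
move=> xI h.
have xs : x \in ssSet I by rewrite inE xI h.
rewrite inE xI /=; apply/andP; split; apply/existsP; exists x; by rewrite xs eqxx.
Qed.

Lemma down (m n : nat) (I : {set gvert m n}) k x :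
  val x.1 + val x.2 < k -> x \in I ->
  exists s, [&& s \in I, is_source I s & gpath s x].
Proof.
elim: k x => [//|k IH] x hk xI.
case hs: [forall y in I, ~~ garrow y x].
  exists x; by rewrite xI /is_source xI hs /gpath connect0.
move/negbT: hs; rewrite negb_forall => /existsP [y]; rewrite negb_imply negbK.
move=> /andP [yI hyx].
have e := @garrow_sum _ _ _ _ hyx.
have hy : val y.1 + val y.2 < k.
  move: hk e; rewrite /=. lia.
have [s /and3P [sI ss gp]] := IH y hy yI.
exists s; rewrite sI ss /=.
apply: connect_trans gp _; exact: connect1.
Qed.

Lemma up (m n : nat) (I : {set gvert m n}) k x :
  (m + n) - (val x.1 + val x.2) < k -> x \in I ->
  exists s, [&& s \in I, is_sink I s & gpath x s].
Proof.
elim: k x => [//|k IH] x hk xI.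
case hs: [forall y in I, ~~ garrow x y].
  exists x; by rewrite xI /is_sink xI hs /gpath connect0.
move/negbT: hs; rewrite negb_forall => /existsP [y]; rewrite negb_imply negbK.
move=> /andP [yI hyx].
have e := @garrow_sum _ _ _ _ hyx.
have l1 := ltn_ord y.1; have l2 := ltn_ord y.2.
have hy : (m + n) - (val y.1 + val y.2) < k.
  move: hk e l1 l2; rewrite /=. lia.
have [s /and3P [sI ss gp]] := IH y hy yI.
exists s; rewrite sI ss /=.
apply: connect_trans _ gp; exact: connect1.
Qed.

Theorem mainTheorem6 (m n : nat) (hm : 0 < m) (hn : 0 < n)
    (I J : {set gvert m n}) :
  is_interval I -> is_interval J -> ccSet I \subset J -> I \subset J.
Proof.
move=> _ /and3P [_ _ cJ] sub.
apply/subsetP => x xI.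
have [s /and3P [sI ss gs]] := @down m n I (val x.1 + val x.2).+1 x (ltnSn _) xI.
have [t /and3P [tI st gt]] := @up m n I ((m + n) - (val x.1 + val x.2)).+1 x (ltnSn _) xI.
have sJ : s \in J by apply: (subsetP sub); apply: ss_in_cc; rewrite ?ss.
have tJ : t \in J by apply: (subsetP sub); apply: ss_in_cc; rewrite ?st ?orbT.
move/forallP: cJ => /(_ s) /implyP /(_ sJ) /forallP /(_ t) /implyP /(_ tJ)
  /forallP /(_ x) /implyP; apply; by rewrite gs gt.
Qed.
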